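(* Let $m\ge4$, $B^m(x)=\frac{x}{1+x^{m-2}}$, $B^m_0(x)=x$ and $B^m_j(x)=B^m(B^m_{j-1}(x))$ for $j\ge1$. For every $j\ge0$, the equation $B^m_j(x)=-1$ has at least one root $x\in\mathbb{C}$, and this root is not a root of $B^m_{j'}(x)=-1$ for any $j'\neq j$. *)

(* Defs.v *)
From mathcomp Require Import all_boot all_order all_algebra.
From mathcomp Require Import all_reals.
From mathcomp Require Export complex.
Set Implicit Arguments. Unset Strict Implicit. Unset Printing Implicit Defensive.
Import GRing.Theory Num.Theory.
Local Open Scope ring_scope.

Definition Bm {F : fieldType} (m : nat) (y : F) : option F :=
  if 1 + y ^+ (m - 2) == 0 then None else Some (y / (1 + y ^+ (m - 2))).

Fixpoint Bmj {F : fieldType} (m j : nat) (x : F) : option F :=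
  match j with
  | 0 => Some x
  | j'.+1 => match Bmj m j' x with
             | Some y => Bm m y
             | None => None
             end
  end.

(* Main.v *)
Require Import Defs.
From mathcomp Require Import all_boot all_order all_algebra.
From mathcomp Require Import all_reals complex.
Import Order.TTheory GRing.Theory Num.Theory.
Local Open Scope ring_scope.

Lemma Bmj_add {F : fieldType} (m a b : nat) (x : F) :
  Bmj m (a + b) x = match Bmj m a x with Some y => Bmj m b y | None => None end.
Proof.
elim: b => [|b IH]; first by rewrite addn0; case: (Bmj m a x).
rewrite addnS /= IH; by case: (Bmj m a x).
Qed.


Lemma orbit_neg1 (R : realType) (m : nat) (n : nat) :
  Bmj m n.+1 (-1 : R[i]) <> Some (-1).
Proof.
set k := (m - 2)%N.
have [ok|ek] := boolP (odd k).
  have H : Bm m (-1 : R[i]) = None.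
    by rewrite /Bm -/k -signr_odd ok expr1 addrN eqxx.
  have : Bmj m n.+1 (-1 : R[i]) = None.
    elim: n => [|n IH] /=; first exact: H.
    by move: IH => /= ->.
  by move=> ->.
suff : forall n, exists y : R[i], Bmj m n.+1 (-1) = Some y /\ -1 < y < 0.
  move=> /(_ n) [y [-> /andP [h1 _]]] [e]; by rewrite e ltxx in h1.
have step : forall y : R[i], -1 < y < 0 -> exists z, Bm m y = Some z /\ -1 < z < 0.
  move=> y /andP [h1 h2].
  have yr : y \is Num.real by exact: ltr0_real.
  have pk : 0 <= y ^+ k by exact: real_exprn_even_ge0.
  have d1 : 1 <= 1 + y ^+ k by rewrite lerDl.
  have d0 : 0 < 1 + y ^+ k by apply: lt_le_trans d1.
  rewrite /Bm -/k (negbTE (lt0r_neq0 d0)).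
  exists (y / (1 + y ^+ k)); split => //.
  apply/andP; split.
    rewrite ltr_pdivlMr // mulN1r ltrNl.
    apply: lt_le_trans d1; by rewrite -ltrNl.
  by rewrite pmulr_llt0 // invr_gt0.
elim => [|p [y [e hy]]].
  rewrite /= /Bm -/k -signr_odd (negbTE ek) expr0.
  have h2 : (1 + 1 : R[i]) != 0 by rewrite -mulr2n pnatr_eq0.
  rewrite (negbTE h2); exists (-1 / (1 + 1)); split => //.
  have d0 : (0 : R[i]) < 1 + 1 by rewrite -mulr2n ltr0n.
  apply/andP; split.
    rewrite ltr_pdivlMr // mulN1r ltrN2 ltrDr ltr01 //.
  by rewrite pmulr_llt0 ?invr_gt0 // ltrN10.
have [z [ez hz]] := step y hy.
exists z; split => //.
by rewrite /= -/(Bmj m p.+1 (-1)) e.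
Qed.

From mathcomp Require Import zify.

Lemma preimage (F : closedFieldType) (m : nat) (hm : (4 <= m)%N) (c : F) :
  c != 0 -> exists y : F, y != 0 /\ Bm m y = Some c.
Proof.
move=> c0.
have [k' ek] : exists k', (m - 2 = k'.+2)%N by exists (m - 4)%N; lia.
pose P := fun i : nat => if i == 0%N then -1 else if i == 1%N then c^-1 else (0 : F).
have [y hy] := @solve_monicpoly F k'.+2 P isT.
rewrite 2!big_ord_recl big1 /= in hy; last by move=> i _; rewrite /P /= mul0r.
rewrite /P /= expr0 expr1 mulr1 addr0 in hy.
have y0 : y != 0.
  apply/negP => /eqP y0; move: hy; rewrite y0 expr0n /= mulr0 addr0 => /eqP.
  by rewrite eq_sym oppr_eq0 oner_eq0.
exists y; split => //.
rewrite /Bm.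
have -> : 1 + y ^+ (m - 2) = c^-1 * y by rewrite ek hy addrA addrN add0r.
have hn : (c^-1 * y == 0) = false by apply/negbTE; rewrite mulf_neq0 ?invr_eq0.
rewrite hn.
by rewrite invfM invrK mulrC -mulrA mulVf // mulr1.
Qed.

Lemma exists_root (F : closedFieldType) (m : nat) (hm : (4 <= m)%N) (j : nat) :
  forall c : F, c != 0 -> exists x : F, Bmj m j x = Some c.
Proof.
elim: j => [|j IH] c c0; first by exists c.
have [y [y0 ey]] := @preimage F m hm c c0.
have [x ex] := IH y y0.
by exists x; rewrite /= ex.
Qed.

Theorem proposition2p11 (R : realType) (m : nat) (hm : (4 <= m)%N) (j : nat) :
  exists x : R[i],
    Bmj m j x = Some (-1) /\
    forall j' : nat, j' <> j -> Bmj m j' x <> Some (-1).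
Proof.
have h1 : (-1 : R[i]) != 0 by rewrite oppr_eq0 oner_eq0.
have [x ex] := @exists_root R[i] m hm j (-1) h1.
exists x; split => // j' nj e.
have [lt|gt] : (j' < j \/ j < j')%N by lia.
  have e2 := Bmj_add m j' (j - j') x.
  rewrite e (subnKC (ltnW lt)) ex in e2.
  apply: (@orbit_neg1 R m (j - j').-1).
  have -> : (j - j').-1.+1 = (j - j')%N by lia.
  by rewrite -e2.
have e2 := Bmj_add m j (j' - j) x.
rewrite ex (subnKC (ltnW gt)) e in e2.
apply: (@orbit_neg1 R m (j' - j).-1).
have -> : (j' - j).-1.+1 = (j' - j)%N by lia.
by rewrite -e2.
Qed.
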